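(* Let $(G,\cdot)$ be a two-step nilpotent group and $n$ an integer, and define $a\circ b=a\cdot a^{-n}ba^{n}=ab[b,a]^n$ for $a,b\in G$. Then $(G,\circ)$ is a two-step nilpotent group.
   Context: A two-step nilpotent group is a group of nilpotency class at most $2$, i.e. all commutators are central; the commutator convention is $[a,b]=a^{-1}b^{-1}ab$. (For this operation, $(G,\cdot,\circ)$ is the skew left brace associated with the post-group $a\triangleright b=a^{-n}ba^n$ via $a\circ b=a\cdot(a\triangleright b)$.) *)

(* Defs.v *)
From HB Require Import structures.
From mathcomp Require Import all_boot all_order all_algebra.
From mathcomp Require Import monoid.

Set Implicit Arguments.
Unset Strict Implicit.
Unset Printing Implicit Defensive.

Local Open Scope group_scope.

Definition zexpg (G : groupType) (x : G) (n : int) : G :=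
  match n with
  | Posz k => x ^+ k
  | Negz k => x ^- k.+1
  end.

Definition group_axioms (T : Type) (mul : T -> T -> T) (one : T) (inv : T -> T)
  : Prop :=
  [/\ (forall a b c, mul a (mul b c) = mul (mul a b) c),
      (forall a, mul one a = a /\ mul a one = a)
    & (forall a, mul (inv a) a = one /\ mul a (inv a) = one)].

Definition comm_law (T : Type) (mul : T -> T -> T) (inv : T -> T) (a b : T) : T :=
  mul (inv a) (mul (inv b) (mul a b)).

Definition class_le2_law (T : Type) (mul : T -> T -> T) (inv : T -> T) : Prop :=
  forall a b c, mul (comm_law mul inv a b) c = mul c (comm_law mul inv a b).

Definition two_step_nilpotent (G : groupType) : Prop :=
  forall a b c : G, commute [~ a, b] c.

Definition circ (G : groupType) (n : int) (a b : G) : G :=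
  a * (zexpg a (- n)%R * b * zexpg a n).

Definition is_two_step_nilpotent_group (T : Type) (mul : T -> T -> T) : Prop :=
  exists (one : T) (inv : T -> T),
    group_axioms mul one inv /\ class_le2_law mul inv.

(* Main.v *)
Require Import Defs.
From HB Require Import structures.
From mathcomp Require Import all_boot all_order all_algebra.
From mathcomp Require Import monoid.
Local Open Scope group_scope.

Section S.
Variable G : groupType.
Hypothesis nil : two_step_nilpotent G.
Definition Zc (z : G) := forall c, commute z c.

Lemma ZR a b : Zc [~ a, b]. Proof. exact: nil. Qed.
Lemma ZM x y : Zc x -> Zc y -> Zc (x * y).
Proof. by move=> hx hy c; rewrite /commute -mulgA hy !mulgA hx. Qed.
Lemma ZV x : Zc x -> Zc x^-1.
Proof. by move=> hx c; apply/commute_sym/commuteV/commute_sym. Qed.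
Lemma ZX x k : Zc x -> Zc (x ^+ k).
Proof. by move=> hx c; apply/commute_sym/commuteX/commute_sym. Qed.
Lemma Z1 : Zc 1. Proof. by move=> c; rewrite /commute mul1g mulg1. Qed.

Lemma Zr (c z : G) : Zc z -> [~ c, z] = 1.
Proof. by move=> hz; apply/eqP/commgP/commute_sym. Qed.
Lemma Zl (c z : G) : Zc z -> [~ z, c] = 1.
Proof. by move=> hz; apply/eqP/commgP. Qed.

Lemma conjE (b x : G) : b ^ x = b * [~ b, x].
Proof. by rewrite commgEl mulVKg. Qed.

Lemma Jz (z y : G) : Zc z -> z ^ y = z.
Proof. by move=> hz; apply/conjg_fixP; rewrite Zl. Qed.

Lemma commMr (c x y : G) : [~ c, x * y] = [~ c, x] * [~ c, y].
Proof.
have e : c ^ (x * y) = c * ([~ c, y] * [~ c, x]).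
  by rewrite conjgM (conjE c x) conjMg (Jz [~ c, x] y (ZR c x)) (conjE c y) -mulgA.
by rewrite commgEl e mulKg (ZR c y).
Qed.

Lemma commVr (c x : G) : [~ c, x^-1] = [~ c, x]^-1.
Proof. by apply/esym/mulg1_eq; rewrite -commMr mulgV commg1. Qed.

Lemma commMl (x y c : G) : [~ x * y, c] = [~ x, c] * [~ y, c].
Proof. by rewrite -invgR commMr invgM !invgR (ZR y c). Qed.

Lemma commVl (x c : G) : [~ x^-1, c] = [~ x, c]^-1.
Proof. by rewrite -invgR commVr invgR. Qed.

Lemma swap_mid (u v w t : G) : Zc v -> u * v * (w * t) = u * w * (v * t).
Proof. by move=> hv; rewrite -!mulgA (mulgA v w) (hv w) !mulgA. Qed.

Lemma commXr (c x y : G) k : [~ c, (x * y) ^+ k] = [~ c, x ^+ k] * [~ c, y ^+ k].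
Proof.
elim: k => [|k IH]; first by rewrite !expg0 commg1 mulg1.
by rewrite !expgSr !commMr IH swap_mid //; apply: ZR.
Qed.

Variable n : int.
Definition E (a : G) := zexpg a n.

Lemma ElemE (c x y : G) : [~ c, E (x * y)] = [~ c, E x] * [~ c, E y].
Proof.
rewrite /E; case: n => k /=; first exact: commXr.
by rewrite !commVr commXr invgM (ZV _ (ZR c (y ^+ k.+1))).
Qed.

Lemma EZ z : Zc z -> Zc (E z).
Proof. by rewrite /E; case: n => k /= hz; [apply: ZX | apply/ZV/ZX]. Qed.

Lemma E1 : E 1 = 1.
Proof. by rewrite /E; case: n => k /=; rewrite expg1n ?invg1. Qed.

Lemma Einv a : zexpg a (- n)%R = (E a)^-1.
Proof. by rewrite /E; case: n => [[|k]|k] /=; rewrite ?invg1 ?invgK. Qed.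

Lemma Eaa a : [~ a, E a] = 1.
Proof. by rewrite /E; case: n => k /=; [apply: commgXg | apply: commgXVg]. Qed.

Lemma circE a b : circ n a b = a * (b * [~ b, E a]).
Proof. by rewrite /circ Einv -mulgA -conjgE conjE. Qed.

Lemma mvk (k x y : G) : Zc k -> x * k * y = x * y * k.
Proof. by move=> hk; rewrite -mulgA (hk y) mulgA. Qed.

Lemma main : is_two_step_nilpotent_group (@circ G n).
Proof.
exists 1, (fun x => x^-1); split; [split|].
- move=> a b c; rewrite !circE.
  rewrite (commMl b (c * [~ c, E b]) (E a)) (commMl c [~ c, E b] (E a)).
  rewrite (ElemE c a (b * [~ b, E a])) (ElemE c b [~ b, E a]).
  rewrite (Zl (E a) [~ c, E b] (ZR _ _)) (Zr c (E [~ b, E a]) (EZ _ (ZR _ _))).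
  have h1 := ZR c (E b); have h2 := ZR b (E a); have h3 := ZR c (E a).
  move: [~ c, E b] h1 => k1 h1; move: [~ b, E a] h2 => k2 h2.
  move: [~ c, E a] h3 => k3 h3.
  by rewrite !mulg1 !mulgA !(mvk _ _ _ h1) !(mvk _ _ _ h2) !(mvk _ _ _ h3).
- by move=> a; rewrite !circE E1 commg1 comm1g !mulg1 mul1g.
- move=> a; rewrite !circE; split.
    have : [~ a, E (a^-1 * a)] = [~ a, E a^-1] * [~ a, E a] by apply: ElemE.
    by rewrite mulVg E1 commg1 Eaa mulg1 => <-; rewrite mulg1 mulVg.
  by rewrite commVl Eaa invg1 mulg1 mulgV.
- move=> a b c.
  have hw : Zc (comm_law (circ n) (fun x => x^-1) a b).
    rewrite /comm_law !circE.
    have h1 := ZR b (E a); have h2 := ZR (a * (b * [~ b, E a])) (E b^-1).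
    move: [~ b, E a] h1 h2 => k1 h1 h2.
    have h3 := ZR (b^-1 * (a * (b * k1) * [~ a * (b * k1), E b^-1])) (E a^-1).
    move: [~ b^-1 * (a * (b * k1) * [~ a * (b * k1), E b^-1]), E a^-1] h3 => k3 h3.
    move: [~ a * (b * k1), E b^-1] h2 => k2 h2.
    have -> : a^-1 * (b^-1 * (a * (b * k1) * k2) * k3) = [~ a, b] * k1 * k2 * k3.
      by rewrite /commg /conjg !mulgA.
    by apply: ZM => //; apply: ZM => //; apply: ZM => //; apply: ZR.
  move: (comm_law _ _ a b) hw => w hw.
  rewrite !circE (Zr c (E w) (EZ _ hw)) (Zl (E c) w hw) !mulg1.
  exact: hw.
Qed.
End S.

Theorem proposition5p4 (G : groupType) (n : int) :
  two_step_nilpotent G -> is_two_step_nilpotent_group (@circ G n).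
Proof. by move=> nil; apply: main. Qed.
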